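(* Let $M$ be a sparse paving matroid of rank $r$ on $n$ elements with $2r\leq n$. Then, averaged over all cyclic orderings of $E(M)$, the number of $r$-intervals that are circuit-hyperplanes of $M$ is less than two.
   Context: A matroid $M$ of rank $r$ is sparse paving if every nonspanning circuit is a hyperplane; equivalently, every $r$-subset of $E(M)$ is a basis or a circuit-hyperplane (a set that is both a circuit and a hyperplane). A cyclic ordering (cycle) on $E(M)$ is a cyclic permutation $\sigma$ of $E(M)$ consisting of a single cycle through all $n$ elements; there are $(n-1)!$ of them. A $k$-interval in $\sigma$ is a set of $k$ cyclically-consecutive elements, i.e., $\{x,\sigma(x),\dots,\sigma^{k-1}(x)\}$ for some $x$. *)

(* Defs.v *)
From mathcomp Require Import all_boot all_order all_algebra all_fingroup.
Set Implicit Arguments. Unset Strict Implicit. Unset Printing Implicit Defensive.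

Section Matroids.
Variable T : finType.

Definition base_axiom (B : {set {set T}}) : Prop :=
  B != set0 /\
  forall B1 B2, B1 \in B -> B2 \in B ->
    forall x, x \in B1 :\: B2 ->
      exists2 y, y \in B2 :\: B1 & (B1 :\ x) :|: [set y] \in B.

Record matroid := Matroid { bases : {set {set T}}; bases_ax : base_axiom bases }.

Variable M : matroid.

Definition indep (X : {set T}) : bool := [exists B in bases M, X \subset B].

Definition circuit (C : {set T}) : bool :=
  ~~ indep C && [forall D : {set T}, (D \proper C) ==> indep D].

Definition rk (X : {set T}) : nat := \max_(Y : {set T} | (Y \subset X) && indep Y) #|Y|.

Definition mrank : nat := rk [set: T].

Definition flat (F : {set T}) : bool := [forall x, (x \notin F) ==> (rk F < rk (x |: F))].

Definition hyperplane (H : {set T}) : bool := flat H && (rk H + 1 == mrank).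

Definition spanning (X : {set T}) : bool := rk X == mrank.

Definition circuit_hyperplane (X : {set T}) : bool := circuit X && hyperplane X.

Definition sparse_paving : Prop :=
  forall C, circuit C -> ~~ spanning C -> hyperplane C.

End Matroids.

Definition cyclic_ordering (T : finType) (s : {perm T}) : bool :=
  [forall x, porbit s x == [set: T]].

Definition intervals (T : finType) (s : {perm T}) (k : nat) : {set {set T}} :=
  [set [set (s ^+ i)%g x | i : 'I_k] | x : T].

Definition num_ch_intervals (T : finType) (M : matroid T) (s : {perm T}) : nat :=
  #|[set I in intervals s (mrank M) | circuit_hyperplane M I]|.

(* Main.v *)
Require Import Defs.
From mathcomp Require Import all_boot all_order all_algebra all_fingroup.
Import GRing.Theory Num.Theory.
From mathcomp Require Import zify.
Set Implicit Arguments. Unset Strict Implicit. Unset Printing Implicit Defensive.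

Section MatFacts.
Variables (T : finType) (M : matroid T).

Lemma indep_sub (X Y : {set T}) : Y \subset X -> indep M X -> indep M Y.
Proof.
move=> sYX /existsP[B /andP[HB sXB]]; apply/existsP; exists B.
by rewrite HB (subset_trans sYX sXB).
Qed.

Lemma bases_indep B : B \in bases M -> indep M B.
Proof. by move=> HB; apply/existsP; exists B; rewrite HB subxx. Qed.

Lemma indep0 : indep M set0.
Proof.
case: (bases_ax M) => /set0Pn[B HB] _.
by apply: (indep_sub (sub0set B)); apply: bases_indep.
Qed.

Lemma rk_ge (X Y : {set T}) : Y \subset X -> indep M Y -> #|Y| <= rk M X.
Proof. by move=> sYX iY; rewrite /rk; apply: (@leq_bigmax_cond _ (fun Z : {set T} => (Z \subset X) && indep M Z) (fun Z => #|Z|) Y); rewrite sYX. Qed.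

Lemma rk_ex (X : {set T}) : exists2 Y, ((Y : {set T}) \subset X) && indep M Y & #|Y| = rk M X.
Proof.
have H : 0 < #|[pred Y : {set T} | (Y \subset X) && indep M Y]|.
  by apply/card_gt0P; exists set0; rewrite inE sub0set indep0.
have [Y HY HE] := @eq_bigmax_cond _ [pred Y : {set T} | (Y \subset X) && indep M Y] (fun Y => #|Y|) H.
by exists Y; [exact HY | rewrite /rk -HE].
Qed.

Lemma bases_card_eq : forall k B1 B2, #|B1 :\: B2| <= k -> B1 \in bases M -> B2 \in bases M ->
  #|B1| = #|B2|.
Proof.
case: (bases_ax M) => _ Hex.
elim=> [|k IH] B1 B2 Hk H1 H2.
  have s12 : B1 \subset B2 by rewrite -setD_eq0 -cards_eq0 -leqn0.
  have s21 : B2 \subset B1.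
    apply/subsetP=> x xB2; apply/negPn/negP=> xB1.
    have xD : x \in B2 :\: B1 by rewrite inE xB1.
    have [y] := Hex _ _ H2 H1 x xD.
    by rewrite inE => /andP[/negP yB2 yB1]; case: yB2; apply: (subsetP s12).
  by apply/eqP; rewrite eqn_leq !subset_leq_card.
case: (set_0Vmem (B1 :\: B2)) => [E|[x xD]].
  by apply: (IH) => //; rewrite E cards0.
have [y yD HB] := Hex _ _ H1 H2 x xD.
move: xD yD; rewrite !inE => /andP[xB2 xB1] /andP[yB1 yB2].
have cB : #|(B1 :\ x) :|: [set y]| = #|B1|.
  rewrite setUC cardsU1 !inE (negbTE yB1) andbF /= (cardsD1 x B1) xB1. lia.
rewrite -cB; apply: IH HB H2.
have sub : ((B1 :\ x) :|: [set y]) :\: B2 \subset (B1 :\: B2) :\ x.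
  apply/subsetP=> z; rewrite !inE => /andP[zB2 /orP[/andP[zx zB1]|/eqP zy]].
    by rewrite zx zB2 zB1.
  by rewrite zy yB2 in zB2.
have c2 : #|(B1 :\: B2) :\ x| = #|B1 :\: B2| - 1.
  by rewrite [#|B1 :\: B2|](cardsD1 x) !inE xB2 xB1 /=; lia.
move: (subset_leq_card sub); rewrite c2; lia.
Qed.

Lemma bases_card B1 B2 : B1 \in bases M -> B2 \in bases M -> #|B1| = #|B2|.
Proof. exact: (@bases_card_eq #|B1 :\: B2|). Qed.

Lemma indep_basis Y : indep M Y -> exists2 B, B \in bases M & Y \subset B.
Proof. by move=> /existsP[B /andP[HB sYB]]; exists B. Qed.

Lemma mrank_basis B : B \in bases M -> mrank M = #|B|.
Proof.
move=> HB; rewrite /mrank; apply/eqP; rewrite eqn_leq; apply/andP; split; last first.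
  by apply: rk_ge; [exact: subsetT | exact: bases_indep].
have [Y /andP[_ iY] <-] := rk_ex [set: T].
have [B' HB' sYB'] := indep_basis iY.
by rewrite (bases_card HB HB'); apply: subset_leq_card.
Qed.

Lemma indep_le Y : indep M Y -> #|Y| <= mrank M.
Proof.
move=> iY; have [B HB sYB] := indep_basis iY.
by rewrite (mrank_basis HB); apply: subset_leq_card.
Qed.

Lemma circuit_rk C : circuit M C -> 0 < #|C| /\ rk M C + 1 = #|C|.
Proof.
move=> /andP[dC /forallP HC].
have nz : 0 < #|C|.
  rewrite card_gt0; apply/negP=> /eqP E; move: dC; rewrite E indep0. by [].
split=> //.
have [c cC] : exists c, c \in C by apply/card_gt0P.
have iD : indep M (C :\ c) by move: (HC (C :\ c)); rewrite properD1.
have l1 : #|C :\ c| <= rk M C by apply: rk_ge => //; exact: subsetDl.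
have [Y /andP[sYC iY] HY] := rk_ex C.
have pY : Y \proper C.
  rewrite properEneq sYC andbT; apply/negP=> /eqP E; by move: dC; rewrite -E iY.
move: (proper_card pY) l1; rewrite HY (cardsD1 c C) cC /=. lia.
Qed.

Lemma ch_card C : circuit_hyperplane M C -> #|C| = mrank M /\ 0 < #|C|.
Proof.
move=> /andP[cC /andP[_ /eqP hC]]; have [nz E] := circuit_rk cC.
by split=> //; rewrite -hC.
Qed.

Lemma ch_unique C1 C2 a1 a2 : circuit_hyperplane M C1 -> circuit_hyperplane M C2 ->
  a1 \in C1 -> a2 \in C2 -> C1 :\ a1 = C2 :\ a2 -> C1 = C2.
Proof.
move=> H1 H2 a1C a2C ED.
have [e|ne] := eqVneq a1 a2.
  by rewrite -(setD1K a1C) -(setD1K a2C) ED e.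
have [D DE] : exists D, D = C1 :\ a1 by eexists.
have E1 : a1 |: D = C1 by rewrite DE setD1K.
have E2 : a2 |: D = C2 by rewrite DE ED setD1K.
have [cs1 nz1] := ch_card H1.
move: (H1) (H2) => /andP[/andP[dC1 /forallP HC1] /andP[/forallP fl1 /eqP hp1]]
                   /andP[/andP[dC2 _] _].
have bad : forall w, w \in [set a1; a2] -> indep M (w |: D) -> False.
  move=> w; rewrite !inE => /orP[/eqP->|/eqP->].
    by rewrite E1 (negbTE dC1).
  by rewrite E2 (negbTE dC2).
have yC1 : a2 \notin C1.
  apply/negP=> yC; have : a2 \in D by rewrite DE !inE eq_sym ne.
  by rewrite DE ED !inE eqxx.
have lt := implyP (fl1 a2) yC1.
have [Y /andP[sY iY] HY] := rk_ex (a2 |: C1).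
have [BY HBY sYBY] := indep_basis iY.
have YB : Y = BY.
  apply/eqP; rewrite eqEcard sYBY -(mrank_basis HBY) HY -hp1. lia.
have HYb : Y \in bases M by rewrite YB.
have iD : indep M D by move: (HC1 D); rewrite DE properD1.
have [B HB sDB] := indep_basis iD.
have cB := mrank_basis HB.
have cD : #|D| + 1 = mrank M.
  rewrite -cs1 (cardsD1 a1 C1) a1C addnC DE.
  by [].

have [u uBD] : exists u, u \in B :\: D.
  by apply/card_gt0P; rewrite cardsD (setIidPr sDB) -cB -cD addKn.
move: (uBD); rewrite inE => /andP[uD uB].
have EB : B = u |: D.
  by apply/esym/eqP; rewrite eqEcard subUset sub1set uB sDB /= cardsU1 uD -cB -cD addnC.
have Ysub : forall w, w \in Y -> w \notin D -> w \in [set a1; a2].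
  move=> w /(subsetP sY); rewrite -E1 !inE => /orP[->|/orP[->|->]] //; by rewrite orbT.
case: (boolP (u \in Y)) => uY.
  exfalso; apply: (bad u (Ysub u uY uD)); rewrite -EB; exact: bases_indep.
case: (bases_ax M) => _ Hex.
have uBY : u \in B :\: Y by rewrite inE uY uB.
have [w wYB Hw] := Hex _ _ HB HYb u uBY.
move: wYB; rewrite inE => /andP[wB wY].
have wD : w \notin D by apply: contra wB; apply: (subsetP sDB).
exfalso; apply: (bad w (Ysub w wY wD)); move: Hw; rewrite EB setU1K // setUC.
exact: bases_indep.
Qed.

End MatFacts.


Section PermFacts.
Variable T : finType.
Variable r : nat.
Definition ival (s : {perm T}) (x : T) := [set (s ^+ i)%g x | i : 'I_r].

Lemma cyc_conj (s t : {perm T}) : cyclic_ordering s -> cyclic_ordering (s ^ t)%g.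
Proof.
move=> /forallP H; apply/forallP => x; apply/eqP/setP => y; rewrite inE; apply/porbitP.
have : (t^-1)%g y \in porbit s ((t^-1)%g x) by rewrite (eqP (H _)) inE.
case/porbitP => i Hi; exists i.
by rewrite -conjXg -{1}(permKV t x) permJ -Hi permKV.
Qed.

Lemma ival_conj (s t : {perm T}) x : ival (s ^ t)%g (t x) = t @: ival s x.
Proof.
rewrite /ival -imset_comp; apply: eq_imset => i /=.
by rewrite -conjXg permJ.
Qed.

Lemma tperm_swap (C : {set T}) a b : a \in C -> b \notin C ->
  (tperm a b @: C) :\ b = C :\ a.
Proof.
move=> aC bC; apply/setP => y; rewrite !inE (can_imset_pre _ (tpermK a b)) inE.
case: tpermP => [->|->|ya yb].
- by rewrite eqxx (negbTE bC) !andbF.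
- by rewrite eqxx /= (negbTE bC) andbF.
- by move/eqP: ya => ->; move/eqP: yb => ->.
Qed.

Lemma in_tperm_img (C : {set T}) a b : a \in C -> b \in tperm a b @: C.
Proof. by move=> aC; rewrite -{1}(tpermL a b) imset_f. Qed.

Lemma conjX_app (s t : {perm T}) i x : ((s ^ t) ^+ i)%g (t x) = t ((s ^+ i)%g x).
Proof. by rewrite -conjXg permJ. Qed.
End PermFacts.

Set Implicit Arguments. Unset Strict Implicit. Unset Printing Implicit Defensive.

Lemma step1 (T : finType) (M : matroid T) :
  \sum_(s : {perm T} | cyclic_ordering s) num_ch_intervals M s <=
  #|[set p : {perm T} * T | cyclic_ordering p.1 && circuit_hyperplane M (ival (mrank M) p.1 p.2)]|.
Proof.
apply: (@leq_trans (\sum_(s : {perm T} | cyclic_ordering s)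
   #|[set x | circuit_hyperplane M (ival (mrank M) s x)]|)).
  apply: leq_sum => s _; rewrite /num_ch_intervals.
  apply: leq_trans (leq_imset_card (ival (mrank M) s) [set x | circuit_hyperplane M (ival (mrank M) s x)]).
  apply: subset_leq_card; apply/subsetP => J; rewrite inE => /andP[/imsetP[x _ ->] HJ].
  by apply: imset_f; rewrite inE.
rewrite -sum1dep_card.
rewrite -(pair_big_dep (fun s : {perm T} => cyclic_ordering s)
   (fun s x => circuit_hyperplane M (ival (mrank M) s x)) (fun _ _ => 1)) /=.
by apply: leq_sum => s _; rewrite sum1dep_card.
Qed.

Lemma step2 (T : finType) (M : matroid T) :
  #|[set p : {perm T} * T | cyclic_ordering p.1 && circuit_hyperplane M (ival (mrank M) p.1 p.2)]|
   * (mrank M * (#|T| - mrank M)) <=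
  (#|[set s : {perm T} | cyclic_ordering s]| * #|T|
    - #|[set p : {perm T} * T | cyclic_ordering p.1 && circuit_hyperplane M (ival (mrank M) p.1 p.2)]|) * mrank M.
Proof.
set S := [set s : {perm T} | cyclic_ordering s].
set A := [set p : {perm T} * T | cyclic_ordering p.1 && circuit_hyperplane M (ival (mrank M) p.1 p.2)].
pose P := setX S [set: T].
have AP : A \subset P by apply/subsetP => p; rewrite !inE andbT => /andP[->].
pose Dm := [set u : {perm T} * T * 'I_(mrank M) * T |
             (u.1.1 \in A) && (u.2 \notin ival (mrank M) u.1.1.1 u.1.1.2)].
pose psi := fun u : {perm T} * T * 'I_(mrank M) * T =>
  let t := tperm ((u.1.1.1 ^+ u.1.2)%g u.1.1.2) u.2 in
  (((u.1.1.1 ^ t)%g, t u.1.1.2), u.1.2).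
have cDm : #|Dm| = #|A| * (mrank M * (#|T| - mrank M)).
  rewrite /Dm -sum1dep_card.
  rewrite -(pair_big_dep (fun q : {perm T} * T * 'I_(mrank M) => q.1 \in A)
    (fun q b => b \notin ival (mrank M) q.1.1 q.1.2) (fun _ _ => 1)) /=.
  rewrite (eq_bigr (fun _ => #|T| - mrank M)) => [|q qA]; last first.
    rewrite sum1dep_card.
    have -> : [set b | b \notin ival (mrank M) q.1.1 q.1.2] = ~: ival (mrank M) q.1.1 q.1.2.
      by apply/setP=> b; rewrite !inE.
    move: qA; rewrite inE => /andP[_ H]; have [c _] := ch_card H.
    by rewrite -(cardsC (ival (mrank M) q.1.1 q.1.2)) c addKn.
  have E := pair_big_dep (fun p : {perm T} * T => p \in A) (fun _ (_ : 'I_(mrank M)) => true)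
              (fun _ _ => #|T| - mrank M).
  rewrite /= in E.
  rewrite (eq_bigl (fun q : {perm T} * T * 'I_(mrank M) => (q.1 \in A) && true)); last first.
    by move=> q; rewrite andbT.
  rewrite -E sum_nat_const.
  by rewrite sum_nat_const card_ord.
have sub : psi @: Dm \subset setX (P :\: A) [set: 'I_(mrank M)].
  apply/subsetP => _ /imsetP[[[[s x] i] b] uD ->].
  move: uD; rewrite inE /= => /andP[sA bI].
  move: sA; rewrite inE /= => /andP[cs chI].
  have aC : (s ^+ i)%g x \in ival (mrank M) s x by apply: imset_f.
  rewrite /psi /= !inE /= (cyc_conj _ cs) andbT /= ival_conj andbT.
  apply/negP => H.
  have E := ch_unique H chI (in_tperm_img b aC) aC (tperm_swap aC bI).
  by move: (in_tperm_img b aC); rewrite E (negbTE bI).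
have inj : {in Dm &, injective psi}.
  move=> [[[s1 x1] i1] b1] [[[s2 x2] i2] b2].
  rewrite !inE /= => /andP[/andP[c1 h1] b1I] /andP[/andP[c2 h2] b2I].
  rewrite /psi /= => -[Es Ex Ei]; subst i2.
  have a1C : (s1 ^+ i1)%g x1 \in ival (mrank M) s1 x1 by apply: imset_f.
  have a2C : (s2 ^+ i1)%g x2 \in ival (mrank M) s2 x2 by apply: imset_f.
  have e1 := conjX_app s1 (tperm ((s1 ^+ i1)%g x1) b1) i1 x1.
  have e2 := conjX_app s2 (tperm ((s2 ^+ i1)%g x2) b2) i1 x2.
  rewrite tpermL in e1; rewrite tpermL in e2.
  have eb : b1 = b2 by rewrite -e1 -e2 Es Ex.
  subst b2.
  have EC : tperm ((s1 ^+ i1)%g x1) b1 @: ival (mrank M) s1 x1 =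
            tperm ((s2 ^+ i1)%g x2) b1 @: ival (mrank M) s2 x2.
    by rewrite -!ival_conj Es Ex.
  have ED := tperm_swap a1C b1I; rewrite EC (tperm_swap a2C b2I) in ED.
  have EC12 := ch_unique h1 h2 a1C a2C (esym ED).
  have ea : (s1 ^+ i1)%g x1 = (s2 ^+ i1)%g x2.
    case: (eqVneq ((s1 ^+ i1)%g x1) ((s2 ^+ i1)%g x2)) => // ne.
    have : (s1 ^+ i1)%g x1 \in ival (mrank M) s2 x2 :\ (s2 ^+ i1)%g x2.
      by rewrite !inE ne -EC12 a1C.
    by rewrite ED !inE eqxx.
  rewrite ea in Es Ex.
  have es : s1 = s2.
    by rewrite -[s1](conjgK (tperm ((s2 ^+ i1)%g x2) b1)) Es conjgK.
  subst s2.
  have ex := perm_inj Ex; subst x2.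
  by [].
have := subset_leq_card sub.
rewrite (card_in_imset inj) cDm cardsX cardsT card_ord cardsD (setIidPr AP) cardsX cardsT.
by [].
Qed.

Lemma arith s a m r n : s <= a -> a * (r * (n - r)) <= (m * n - a) * r -> 2 * r <= n ->
  (0 < a -> 0 < r) -> 0 < m -> s < 2 * m.
Proof.
move=> hs h2 hn hr hm.
case: (posnP a) => [a0|apos].
  by move: hs; rewrite a0 leqn0 => /eqP ->; rewrite muln_gt0.
have rpos := hr apos.
have h3 : a * (n - r) <= m * n - a.
  by move: h2; rewrite mulnCA [_ * r]mulnC leq_pmul2l.
have h4 : a * (n - r) + a <= m * n.
  have : 0 < a * (n - r) by rewrite muln_gt0 apos subn_gt0; lia.
  lia.
have h5 : a * n < 2 * m * n by nia.
have : a < 2 * m.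
  by move: h5; rewrite ltn_pmul2r //; lia.
lia.
Qed.

Unset Implicit Arguments.

Theorem lemma2p7 (T : finType) (M : matroid T) :
  sparse_paving M -> 2 * mrank M <= #|T| ->
  ((\sum_(s : {perm T} | cyclic_ordering s) num_ch_intervals M s)%:R
     / (#|[set s : {perm T} | cyclic_ordering s]|)%:R < 2 :> rat)%R.
Proof.
move=> _ Hn.
have h1 := step1 M.
have h2 := step2 M.
have hr : 0 < #|[set p : {perm T} * T | cyclic_ordering p.1 && circuit_hyperplane M (ival (mrank M) p.1 p.2)]| -> 0 < mrank M.
  case/card_gt0P => p; rewrite inE => /andP[_ H]; have [c pos] := ch_card H; by rewrite -c.
case: (posnP #|[set s : {perm T} | cyclic_ordering s]|) => [->|mpos].
  by rewrite invr0 mulr0 ltr0n.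
rewrite ltr_pdivrMr ?ltr0n //.
have := arith h1 h2 Hn hr mpos.
by rewrite -(ltr_nat rat) natrM.
Qed.
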